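(* Let $F\in\mathfrak{E}$ have degree $j$ with homogeneous decomposition $F=f_j+f_{j-1}+\cdots+f_{j-a}+\cdots$, where $f_i\in\mathfrak{D}$ for $j\ge i>j-a$ and $f_{j-a}\in\mathfrak{E}$. Let $A=S/\operatorname{Ann}_S F$, and suppose that $H_A(a)_1=H_A(a)_{j-a-1}\neq 0$ and that $H_A(a)_u=0$ for some $u\in[2,j-a-2]$. Then $f_{j-a}$ is linear in $Z_1,\ldots,Z_s$ (every monomial of $f_{j-a}$ has degree at most one in $Z_1,\ldots,Z_s$).
   Context: Let $\mathsf{k}$ be a field, $R=\mathsf{k}\{x_1,\ldots,x_r\}$, $S=\mathsf{k}\{x_1,\ldots,x_r,z_1,\ldots,z_s\}$, $\mathfrak{D}=\mathsf{k}_{DP}[X_1,\ldots,X_r]\subset\mathfrak{E}=\mathsf{k}_{DP}[X_1,\ldots,X_r,Z_1,\ldots,Z_s]$ divided power algebras with $S$ acting on $\mathfrak{E}$ by contraction ($x^{\alpha}\circ X^{[\beta]}=X^{[\beta-\alpha]}$ if $\beta\ge\alpha$ componentwise, $0$ otherwise). For $F\in\mathfrak{E}$ of degree $j$, $A=S/\operatorname{Ann}_S F$ is Artinian Gorenstein of socle degree $j$ with maximal ideal $\mathfrak{m}_A$; $C_A(a)$ is the ideal of $A^*=\bigoplus_i\mathfrak{m}_A^i/\mathfrak{m}_A^{i+1}$ whose degree-$i$ part is the image of $\mathfrak{m}_A^i\cap(0:\mathfrak{m}_A^{\,j+1-a-i})$, $Q_A(a)=C_A(a)/C_A(a+1)$,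 and $H_A(a)_i=\dim_{\mathsf{k}}Q_A(a)_i$. *)

(* Defs.v *)
From HB Require Import structures.
From mathcomp Require Import all_boot all_order all_algebra.
From mathcomp Require Import mpoly.
From Stdlib Require Import ClassicalEpsilon.

Set Implicit Arguments.
Unset Strict Implicit.
Unset Printing Implicit Defensive.
Import Order.TTheory GRing.Theory.
Local Open Scope ring_scope.

(* Conventions.  n = r + s variables; variable i : 'I_(r+s) is x_(i+1)
   (resp. X_(i+1)) when i < r and z_(i-r+1) (resp. Z_(i-r+1)) when r <= i.

   * The divided power algebra E = k_DP[X,Z] is represented, as a k-vector
     space, by {mpoly k[r+s]}: the polynomial sum_b c_b 'X_[b] stands for
     sum_b c_b X^[b] (divided power monomials).  Only the vector space
     structure and the contraction action are used, so the divided power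
     multiplication is never needed.
   * The ring S acting on E is represented by the polynomial ring
     {mpoly k[r+s]} (since m^(j+1) F = 0, the quotient
     S / Ann_S F is the same for the power series ring and for the
     polynomial ring). *)

Section Defs.
Variables (k : fieldType) (r s : nat).
Local Notation n := (r + s)%N.
Local Notation P := {mpoly k[n]}.

Definition contract (g F : P) : P :=
  \sum_(a <- msupp g) \sum_(b <- msupp F)
     (if (a <= b)%MM then (g@_a * F@_b) *: 'X_[b - a] else 0).

Definition hcomp (i : nat) (F : P) : P :=
  \sum_(b <- msupp F | mdeg b == i) F@_b *: 'X_[b].

Definition zdeg (b : 'X_{1..n}) : nat := \sum_(i < n | (r <= i)%N) b i.

Definition in_D (F : P) : Prop := forall b, b \in msupp F -> zdeg b = 0%N.

Definition Z_linear (F : P) : Prop := forall b, b \in msupp F -> (zdeg b <= 1)%N.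

Definition has_degree (F : P) (j : nat) : Prop := msize F = j.+1.

Definition Ann (F : P) : P -> Prop := fun g => contract g F = 0.

Definition mpow (i : nat) : P -> Prop :=
  fun g => forall b, b \in msupp g -> (i <= mdeg b)%N.

Definition sumsp (U V : P -> Prop) : P -> Prop :=
  fun g => exists u v, U u /\ V v /\ g = u + v.

Definition colon (I J : P -> Prop) : P -> Prop :=
  fun g => forall h, J h -> I (g * h).

(* dim_k (U / V) = d, for subspaces V <= U *)
Definition qdim_is (U V : P -> Prop) (d : nat) : Prop :=
  exists v : 'I_d -> P,
    (forall t, U (v t)) /\
    (forall c : 'I_d -> k, V (\sum_t c t *: v t) -> forall t, c t = 0) /\
    (forall g, U g -> exists c : 'I_d -> k, V (g - \sum_t c t *: v t)).

Definition qdim (U V : P -> Prop) : nat :=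
  epsilon (inhabits 0%N) (fun d => qdim_is U V d).

(* A = S / Ann_S F, m_A its maximal ideal.  Lifted to S, the ideal
   m_A^i /\ (0 : m_A^(j+1-a-i)) of A is
     Cl a i := (m^i + Ann F) /\ (Ann F : m^(j+1-a-i)),
   and C_A(a)_i = (Cl a i + m^(i+1) + Ann F) / (m^(i+1) + Ann F),
   a subspace of m_A^i / m_A^(i+1) = (m^i + Ann F)/(m^(i+1) + Ann F). *)
Definition Clift (F : P) (j a i : nat) : P -> Prop :=
  fun g => sumsp (mpow i) (Ann F) g /\ colon (Ann F) (mpow (j.+1 - a - i)) g.

Definition Cnum (F : P) (j a i : nat) : P -> Prop :=
  sumsp (Clift F j a i) (sumsp (mpow i.+1) (Ann F)).

(* H_A(a)_i = dim_k Q_A(a)_i = dim_k C_A(a)_i / C_A(a+1)_i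
           = dim_k (Cnum a i) / (Cnum (a+1) i) *)
Definition HA (F : P) (j a i : nat) : nat :=
  qdim (Cnum F j a i) (Cnum F j a.+1 i).

End Defs.

Arguments in_D {k} r {s} F.
Arguments Z_linear {k} r {s} F.

(* Main.v *)
Require Import Defs.
From HB Require Import structures.
From mathcomp Require Import all_boot all_order all_algebra.
From mathcomp Require Import mpoly ssrcomplements.
From Stdlib Require Import ClassicalEpsilon Classical.

Set Implicit Arguments.
Unset Strict Implicit.
Unset Printing Implicit Defensive.
Import Order.TTheory GRing.Theory.
Local Open Scope ring_scope.

Section Aux.
Variables (k : fieldType) (r s : nat).
Local Notation n := (r + s)%N.
Local Notation P := {mpoly k[n]}.

Definition Kc (F : P) (a : 'X_{1..n}) : P :=
  \sum_(b <- msupp F) (if (a <= b)%MM then F@_b *: 'X_[b - a] else 0).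

Lemma contractE (g F : P) : contract g F = \sum_(a <- msupp g) g@_a *: Kc F a.
Proof.
rewrite /contract; apply: eq_bigr => a _; rewrite scaler_sumr; apply: eq_bigr => b _.
by case: ifP; rewrite ?scaler0 ?scalerA.
Qed.

Lemma sumE (K : 'X_{1..n} -> P) (g : P) i : (msize g <= i)%N ->
  \sum_(a <- msupp g) g@_a *: K a = \sum_(m : 'X_{1..n < i}) g@_m *: K m.
Proof.
move=> le_pi; set I : subFinType _ := 'X_{1..n < i}.
rewrite (big_mksub I) ?msupp_uniq //=; first last.
  by move=> x /msize_mdeg_lt /leq_trans; apply.
rewrite big_rmcond //= => j /memN_msupp_eq0 ->.
by rewrite scale0r.
Qed.

Lemma contract_lin (F : P) c g1 g2 :
  contract (c *: g1 + g2) F = c *: contract g1 F + contract g2 F.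
Proof.
rewrite !contractE.
set i := (msize g1 + msize g2 + msize (c *: g1 + g2))%N.
have h1 : (msize g1 <= i)%N by exact: leq_trans (leq_addr _ _) (leq_addr _ _).
have h2 : (msize g2 <= i)%N by exact: leq_trans (leq_addl _ _) (leq_addr _ _).
have h3 : (msize (c *: g1 + g2) <= i)%N by exact: leq_addl.
rewrite (sumE _ h1) (sumE _ h2) (sumE _ h3).
rewrite scaler_sumr -big_split /=; apply: eq_bigr => m _.
by rewrite mcoeffD mcoeffZ scalerDl scalerA.
Qed.

Lemma contract0 (F : P) : contract 0 F = 0.
Proof. by rewrite contractE msupp0 big_nil. Qed.

Lemma contractD (F : P) g1 g2 : contract (g1 + g2) F = contract g1 F + contract g2 F.
Proof. by have := contract_lin F 1 g1 g2; rewrite !scale1r. Qed.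

Lemma contractZ (F : P) c g : contract (c *: g) F = c *: contract g F.
Proof. by rewrite -[c *: g]addr0 contract_lin contract0 addr0. Qed.

Lemma contractN (F : P) g : contract (- g) F = - contract g F.
Proof. by rewrite -scaleN1r contractZ scaleN1r. Qed.

Lemma coefE (F : P) x : F@_x = \sum_(b <- msupp F) F@_b * (b == x)%:R.
Proof.
rewrite {1}[F]mpolyE raddf_sum /=; apply: eq_bigr => b _.
by rewrite mcoeffZ mcoeffX.
Qed.

Lemma contract_coef (g F : P) c :
  (contract g F)@_c = \sum_(a <- msupp g) g@_a * F@_(a + c).
Proof.
rewrite contractE raddf_sum /=; apply: eq_bigr => a _.
rewrite mcoeffZ; congr (_ * _).
rewrite /Kc raddf_sum /= (coefE F (a + c)); apply: eq_bigr => b _.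
case: ifP => hab.
  rewrite mcoeffZ mcoeffX; congr (_ * (_ %:R)).
  by rewrite -(eqm_add2r a) submK // addmC.
rewrite mcoeff0; case: eqP => [e|]; last by rewrite mulr0.
by move: hab; rewrite e lem_addr.
Qed.


Lemma hcomp_coef i (F : P) b : (hcomp i F)@_b = if mdeg b == i then F@_b else 0.
Proof.
rewrite /hcomp raddf_sum /= big_mkcond /=.
case: ifP => hb.
  rewrite (coefE F b); apply: eq_bigr => x _.
  case: (eqVneq x b) => [->|ne]; first by rewrite hb mcoeffZ mcoeffX eqxx.
  by case: ifP => _; rewrite ?mcoeffZ ?mcoeffX ?(negbTE ne) mulr0.
rewrite big1_seq // => x _; case: ifP => // hx.
rewrite mcoeffZ mcoeffX; case: (eqVneq x b) => [e|_]; last by rewrite mulr0.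
by move: hx; rewrite e hb.
Qed.

Lemma zdegD (x y : 'X_{1..n}) : @zdeg r s (x + y)%MM = (@zdeg r s x + @zdeg r s y)%N.
Proof. by rewrite /zdeg -big_split; apply: eq_bigr => i _; rewrite mnmDE. Qed.

Lemma zdegU (t : 'I_n) : (r <= t)%N -> @zdeg r s U_(t)%MM = 1%N.
Proof.
move=> rt; rewrite /zdeg (bigD1 t) //= mnm1E eqxx big1 // => i /andP[_ ne].
by rewrite mnm1E eq_sym (negbTE ne).
Qed.

Lemma splitU (v : 'X_{1..n}) (t : 'I_n) : (0 < v t)%N -> v = (U_(t) + (v - U_(t)))%MM.
Proof.
move=> vt; rewrite addmC submK //; apply/mnm_lepP => i; rewrite mnm1E.
by case: eqP => [<-|].
Qed.

Lemma extZ (v : 'X_{1..n}) : (0 < @zdeg r s v)%N ->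
  exists (t : 'I_n) v', (r <= t)%N /\ v = (U_(t) + v')%MM /\ @zdeg r s v' = (@zdeg r s v).-1.
Proof.
move=> hz.
have [t /andP[rt vt]] : exists t : 'I_n, (r <= t)%N && (0 < v t)%N.
  apply/existsP; apply: contraLR hz => /existsPn H; rewrite -leqNgt leqn0 /zdeg.
  apply/eqP; apply: big1 => i ri; move: (H i); rewrite ri /= lt0n negbK.
  by move/eqP.
exists t, (v - U_(t))%MM; split => //; split; first exact: splitU.
by rewrite {2}(splitU vt) zdegD zdegU.
Qed.

Lemma mdeg_split (kk : nat) : forall v : 'X_{1..n}, (kk <= mdeg v)%N ->
  exists e e', v = (e + e')%MM /\ mdeg e = kk.
Proof.
elim: kk => [|kk IH] v hv.
  by exists 0%MM, v; rewrite add0m mdeg0.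
have [t vt] : exists t : 'I_n, (0 < v t)%N.
  apply/existsP; apply: contraLR hv => /existsPn H; rewrite -leqNgt.
  rewrite mdegE big1 // => i _; move: (H i); rewrite lt0n negbK.
  by move/eqP.
have e1 := splitU vt.
have : (kk <= mdeg (v - U_(t)))%N.
  by move: hv; rewrite {1}e1 mdegD mdeg1 add1n ltnS.
case/IH => e [e' [h de]].
exists (U_(t) + e)%MM, e'; split; last by rewrite mdegD mdeg1 de.
by rewrite {1}e1 h addmA.
Qed.

Lemma msuppMX_in (h : P) (E a : 'X_{1..n}) : a \in msupp (h * 'X_[E]) ->
  exists2 a', a' \in msupp h & a = (E + a')%MM.
Proof. by rewrite (perm_mem (msuppMX h E)) => /mapP. Qed.


Lemma dep N d (v : 'I_d -> P) : (#|{: 'X_{1..n < N}}| < d)%N ->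
  exists c : 'I_d -> k, (exists t, c t != 0) /\ mpow N (\sum_t c t *: v t).
Proof.
move=> hd.
pose A : 'M[k]_(d, #|{: 'X_{1..n < N}}|) :=
  \matrix_(t, l) (v t)@_(bmnm (enum_val l)).
have nf : ~~ row_free A.
  rewrite /row_free; apply: contraTN hd => /eqP <-; rewrite -leqNgt.
  exact: rank_leq_col.
have nz : kermx A != 0 by rewrite kermx_eq0.
have [i hi] : exists i, row i (kermx A) != 0.
  apply/existsP; apply: contraR nz => /existsPn H; apply/eqP/row_matrixP => i.
  by move: (H i); rewrite negbK => /eqP ->; rewrite row0.
set c := row i (kermx A).
have cA : c *m A = 0 by apply/sub_kermxP; exact: row_sub.
exists (fun t => c 0 t); split => /=.
  apply: NNPP => H; move/eqP: hi; apply; apply/rowP => t.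
  rewrite mxE; apply: NNPP => /eqP nt; apply: H; exists t.
  rewrite /c mxE; move: nt; by rewrite [X in _ != X -> _]mxE.
move=> b hb; rewrite leqNgt; apply/negP => hlt.
move: hb; rewrite mcoeff_msupp raddf_sum /=.
have := congr1 (fun M : 'M[k]_(1, #|{: 'X_{1..n < N}}|) => M 0 (enum_rank (BMultinom hlt : 'X_{1..n < N}))) cA.
rewrite !mxE /= => e.
suff -> : \sum_(i0 < d) (c 0 i0 *: v i0)@_b = \sum_(j < d) c 0 j * A j (enum_rank (BMultinom hlt)) by rewrite e eqxx.
apply: eq_bigr => t _; rewrite mxE mcoeffZ; congr (_ * _).
by rewrite /A mxE enum_rankK.
Qed.

Lemma findim (U V : P -> Prop) N :
  (forall c x, V x -> V (c *: x)) -> (forall g, mpow N g -> V g) ->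
  exists d, qdim_is U V d.
Proof.
move=> hZ hN; apply: NNPP => H.
have gen : forall d, exists v : 'I_d -> P, (forall t, U (v t)) /\
    (forall c, V (\sum_t c t *: v t) -> forall t, c t = 0).
  elim => [|d [v [hU hI]]].
    by exists (fun _ => 0); split => [[]|c _ []].
  have nq : ~ qdim_is U V d by move=> hq; apply: H; exists d.
  have [g [hg hgn]] : exists g, U g /\
      forall c : 'I_d -> k, ~ V (g - \sum_t c t *: v t).
    apply: NNPP => hn; apply: nq; exists v; split => //; split => // g hg.
    apply: NNPP => hc; apply: hn; exists g; split => // c hv; apply: hc.
    by exists c.
  exists (fun t : 'I_d.+1 => if unlift ord_max t is Some t' then v t' else g).
  split.
    by move=> t; case: (unliftP ord_max t) => [t' _|_]; [exact: hU|exact: hg].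
  move=> c hc.
  have e1 : forall i : 'I_d, unlift ord_max (widen_ord (leqnSn d) i) = Some i.
    move=> i; have -> : widen_ord (leqnSn d) i = lift ord_max i.
      by apply: val_inj; rewrite /= /bump leqNgt ltn_ord add0n.
    by rewrite liftK.
  have E : \sum_(i < d.+1) c i *: (if unlift ord_max i is Some t' then v t' else g)
     = \sum_(i < d) c (widen_ord (leqnSn d) i) *: v i + c ord_max *: g.
    rewrite big_ord_recr /= unlift_none; congr (_ + _).
    by apply: eq_bigr => i _; rewrite e1.
  rewrite E in hc.
  have cm : c ord_max = 0.
    apply: NNPP => /eqP cnz.
    apply: (hgn (fun t => - ((c ord_max)^-1 * c (widen_ord (leqnSn d) t)))).
    have := hZ (c ord_max)^-1 _ hc.
    rewrite scalerDr scalerA mulVf // scale1r addrC; congr (V (_ + _)).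
    rewrite scaler_sumr -sumrN; apply: eq_bigr => t _.
    by rewrite scalerA scaleNr opprK.
  rewrite cm scale0r addr0 in hc.
  have hI' := hI _ hc.
  move=> t; case: (unliftP ord_max t) => [t' ->|->]; last exact: cm.
  have -> : lift ord_max t' = widen_ord (leqnSn d) t'.
    by apply: val_inj; rewrite /= /bump leqNgt ltn_ord add0n.
  exact: hI'.
have [v [hU hI]] := gen (#|{: 'X_{1..n < N}}|.+1).
have [c [[t ct] hm]] := dep v (ltnSn _).
by move: ct; rewrite (hI c (hN _ hm) t) eqxx.
Qed.


Definition scl (U : P -> Prop) := forall c x, U x -> U (c *: x).

Lemma mpowZ i : scl (mpow i).
Proof. by move=> c g h b /msuppZ_le; exact: h. Qed.

Lemma mpow0 i : mpow i (0 : P).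
Proof. by move=> b; rewrite msupp0. Qed.

Lemma Ann0 (F : P) : Ann F 0.
Proof. exact: contract0. Qed.

Lemma AnnZ (F : P) : scl (Ann F).
Proof. by move=> c g; rewrite /Ann contractZ => ->; rewrite scaler0. Qed.

Lemma sumspZ (U V : P -> Prop) : scl U -> scl V -> scl (sumsp U V).
Proof.
move=> hU hV c g [x [y [hx [hy ->]]]]; exists (c *: x), (c *: y).
by rewrite scalerDr; split; [exact: hU|split; [exact: hV|]].
Qed.

Lemma colonZ (F : P) J : scl (colon (Ann F) J).
Proof. by move=> c g hg h hh; rewrite -scalerAl; apply: AnnZ; exact: hg. Qed.

Lemma CnumZ (F : P) j a i : scl (Cnum F j a i).
Proof.
apply: sumspZ; last exact/sumspZ/AnnZ/mpowZ.
move=> c g [h1 h2]; split; [exact: (sumspZ (@mpowZ i) (@AnnZ F))|exact: colonZ].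
Qed.

Lemma Cnum_pow (F : P) j a i g : mpow i.+1 g -> Cnum F j a i g.
Proof.
move=> hg; exists 0, g; split; last split; last by rewrite add0r.
  split; first by exists 0, 0; split; [exact: mpow0|split; [exact: Ann0|rewrite addr0]].
  by move=> h _; rewrite mul0r; exact: Ann0.
by exists g, 0; split => //; split; [exact: Ann0|rewrite addr0].
Qed.

Lemma AnnX (F an : P) (G c0 : 'X_{1..n}) : Ann F an ->
  (contract (an * 'X_[G]) F)@_c0 = 0.
Proof.
move=> han; rewrite contract_coef (perm_big _ (msuppMX an G)) big_map /=.
transitivity ((contract an F)@_(G + c0)); last by rewrite han mcoeff0.
rewrite contract_coef; apply: eq_bigr => a' _.
by rewrite mcoeffMX addmA [(G + a')%MM]addmC -addmA.
Qed.

End Aux.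

From mathcomp Require Import zify ring.

Theorem lemma1p40 (k : fieldType) (r s : nat) (F : {mpoly k[r + s]})
    (j a u : nat) :
  has_degree F j ->
  (forall i : nat, (j - a < i <= j)%N -> in_D r (hcomp i F)) ->
  HA F j a 1 = HA F j a (j - a - 1) ->
  HA F j a 1 <> 0%N ->
  (2 <= u <= j - a - 2)%N ->
  HA F j a u = 0%N ->
  Z_linear r (hcomp (j - a) F).
Proof.
move=> hdeg hD _ _ /andP[u2 um] hu.
set m := (j - a)%N.
apply: NNPP => hnl.
have [w [hw hz]] : exists w, w \in msupp (hcomp m F) /\ (1 < @zdeg r s w)%N.
  apply: NNPP => H; apply: hnl => b hb; rewrite leqNgt; apply/negP => hlt.
  by apply: H; exists b.
move: hw; rewrite mcoeff_msupp hcomp_coef; case: ifP => [/eqP hmw Fw|]; last first.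
  by rewrite eqxx.
have K : forall b, (m < mdeg b)%N -> (0 < @zdeg r s b)%N -> F@_b = 0.
  move=> b hb hzb; apply/eqP; rewrite mcoeff_eq0; apply/negP => hbF.
  have hj : (mdeg b <= j)%N.
    by have := msize_mdeg_lt hbF; rewrite hdeg ltnS.
  have hb' : b \in msupp (hcomp (mdeg b) F).
    by rewrite mcoeff_msupp hcomp_coef eqxx -mcoeff_msupp.
  have := hD (mdeg b) _ b hb'; rewrite hb hj => /(_ isT) hz0.
  by move: hzb; rewrite hz0.
have [t [w1 [rt [ew zw1]]]] := @extZ r s w (ltnW hz).
have zw1' : (0 < @zdeg r s w1)%N by rewrite zw1; lia.
have [t' [w2 [rt' [ew1 zw2]]]] := @extZ r s w1 zw1'.
have dw2 : mdeg w2 = (m - 2)%N.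
  by move: hmw; rewrite ew ew1 !mdegD !mdeg1; lia.
have hw2 : (u - 1 <= mdeg w2)%N by rewrite dw2 /m; lia.
have [e [e' [ew2 de]]] := @mdeg_split r s (u - 1)%N w2 hw2.
set E := (U_(t) + e)%MM; set mu := (U_(t') + e')%MM.
have wE : w = (E + mu)%MM.
  by rewrite ew ew1 ew2; apply/mnmP => i; rewrite !mnmDE; lia.
have dE : mdeg E = u by rewrite mdegD mdeg1 de; lia.
have dmu : mdeg mu = (m - u)%N.
  by move: hmw; rewrite wE mdegD dE => <-; lia.
have zE : (0 < @zdeg r s E)%N by rewrite zdegD zdegU.
have zmu : (0 < @zdeg r s mu)%N by rewrite zdegD zdegU.
have Vn : forall (h : {mpoly k[r + s]}) (G : 'X_{1..r + s}) (x : nat),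
    mpow x h -> (m < x + mdeg G)%N -> (0 < @zdeg r s G)%N ->
    forall c0, (contract (h * 'X_[G]) F)@_c0 = 0.
  move=> h G x hh hx hzG c0; rewrite contract_coef big1_seq // => b /andP[_ hb].
  have [a' ha' ->] := msuppMX_in hb.
  rewrite K ?mulr0 //.
    have := hh _ ha'; rewrite !mdegD; lia.
  rewrite !zdegD; lia.
have UE : Cnum F j a u 'X_[E].
  exists 'X_[E], 0; split; last split; last by rewrite addr0.
    split.
      exists 'X_[E], 0; split; last by split; [exact: Ann0|rewrite addr0].
      by move=> b; rewrite msuppX inE => /eqP ->; rewrite dE.
    move=> h hh; rewrite /Ann; apply/mpolyP => c0; rewrite mcoeff0 mulrC.
    by apply: (Vn _ _ _ hh) => //; rewrite dE /m; lia.
  by exists 0, 0; split; [exact: mpow0|split; [exact: Ann0|rewrite addr0]].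
have nV : ~ Cnum F j a.+1 u 'X_[E].
  case=> cc [q [[_ hcol] [[h [an [hh [han eq2]]]] eq1]]].
  have hX : mpow (j.+1 - a.+1 - u) ('X_[mu] : {mpoly k[r + s]}).
    by move=> b; rewrite msuppX inE => /eqP ->; rewrite dmu /m; lia.
  have := hcol _ hX; rewrite /Ann.
  have -> : cc = 'X_[E] - h - an by rewrite eq1 eq2; ring.
  rewrite !mulrBl !contractD !contractN => /(congr1 (mcoeff 0%MM)).
  rewrite !mcoeffD !mcoeffN mcoeff0 (AnnX mu 0%MM han).
  have V1 : (contract (h * 'X_[mu]) F)@_0%MM = 0.
    by apply: (Vn _ _ _ hh) => //; rewrite dmu /m; lia.
  rewrite V1.
  have XE : 'X_[E] * 'X_[mu] = 'X_[w] :> {mpoly k[r + s]} by rewrite wE mpolyXD.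
  rewrite !subr0 XE contract_coef msuppX big_seq1 mcoeffX eqxx mul1r addm0.
  by move/eqP; rewrite (negbTE Fw).
have [d hd] := @findim k r s (Cnum F j a u) (Cnum F j a.+1 u) u.+1
  (@CnumZ k r s F j a.+1 u) (@Cnum_pow k r s F j a.+1 u).
have q0 : qdim_is (Cnum F j a u) (Cnum F j a.+1 u) 0.
  move: hu; rewrite /HA /qdim => <-; apply: epsilon_spec; by exists d.
case: q0 => v [_ [_ hsp]].
have [c hc] := hsp _ UE.
by apply: nV; move: hc; rewrite big_ord0 subr0.
Qed.
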